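(* Let $G$ be a finite simple graph with no isolated vertices, and suppose $\mathrm{Aut}(G)$ contains an element $\sigma$ of order $2$ such that $\sigma(v_0)=v_0$ for exactly one vertex $v_0\in V(G)$, and $v\sigma(v)\notin E(G)$ for all $v\in V(G)$. Then $G$ is an $\mathcal{N}$ position for Grim.
   Context: Grim is a two-player game on a finite simple undirected graph. Any isolated vertices of the starting graph are deleted before play begins. Players alternate moves; a move consists of selecting a vertex of the current graph and deleting it together with all its incident edges, after which every vertex that has become isolated is also deleted. The player who makes the last legal move wins (a player facing the empty graph has no move and loses). A graph is an $\mathcal{N}$ position if the player about to move has a winning strategy, and a $\mathcal{P}$ position otherwise. An automorphism of $G$ is a permutation of $V(G)$ preserving adjacency. *)

(* Defs.v *)
From mathcomp Require Import all_boot all_fingroup.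
Set Implicit Arguments. Unset Strict Implicit. Unset Printing Implicit Defensive.

(* A finite simple graph is a symmetric irreflexive relation [e] on a finType [T].
   A Grim position is the induced subgraph on a vertex set [S : {set T}]
   that contains no isolated vertices. *)
Section Grim.
Variables (T : finType) (e : rel T).

Definition drop_isolated (S : {set T}) : {set T} :=
  [set v in S | [exists u in S, e v u]].

Definition grim_move (S : {set T}) (v : T) : {set T} :=
  drop_isolated (S :\ v).

(* [grim_win n S] : the player to move on position S wins, computed with
   recursion fuel n; it is correct whenever n >= #|S| (each move strictly
   decreases the number of vertices). *)
Fixpoint grim_win (n : nat) (S : {set T}) : bool :=
  match n with
  | 0 => false
  | n'.+1 => [exists v in S, ~~ grim_win n' (grim_move S v)]
  end.

Definition grim_N : bool := grim_win #|T| (drop_isolated [set: T]).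

End Grim.

(* Main.v *)
Require Import Defs.
From mathcomp Require Import all_boot all_fingroup.
Set Implicit Arguments. Unset Strict Implicit. Unset Printing Implicit Defensive.

Section Aux.
Variables (T : finType) (e : rel T).
Hypothesis e_sym : symmetric e.

Lemma move_drop (A : {set T}) w :
  grim_move e (drop_isolated e A) w = drop_isolated e (A :\ w).
Proof.
apply/setP => x; rewrite !inE.
case xw: (x == w) => //=; case xA: (x \in A) => //=.
apply/andP/existsP.
- case=> _ /existsP [u /andP [uD exu]]; exists u.
  move: uD; rewrite !inE => /and3P [-> -> _]; by rewrite exu.
- case=> u /andP [uD exu]; move: uD; rewrite !inE => /andP [uw uA].
  split; first by apply/existsP; exists u; rewrite uA.
  apply/existsP; exists u; rewrite !inE uw uA exu /= andbT.
  by apply/existsP; exists x; rewrite xA e_sym.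
Qed.

Lemma drop_sub (A : {set T}) : drop_isolated e A \subset A.
Proof. by apply/subsetP => x; rewrite inE => /andP []. Qed.

Lemma drop_closed (A : {set T}) x : x \in drop_isolated e A ->
  exists2 u, u \in drop_isolated e A & e x u.
Proof.
rewrite inE => /andP [xA /existsP [u /andP [uA exu]]]; exists u => //.
by rewrite inE uA; apply/existsP; exists x; rewrite xA e_sym.
Qed.

Variable s : {perm T}.
Hypothesis s_aut : forall x y : T, e (s x) (s y) = e x y.
Hypothesis ss : forall x, s (s x) = x.
Hypothesis s_nonadj : forall v : T, ~~ e v (s v).

Definition inv (A : {set T}) := forall x, (s x \in A) = (x \in A).

Lemma inv_drop A : inv A -> inv (drop_isolated e A).
Proof.
move=> HA x; rewrite !inE HA; case: (x \in A) => //=.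
apply/existsP/existsP => [[u /andP [uA exu]]|[u /andP [uA exu]]].
- exists (s u); rewrite HA uA /=. by rewrite -s_aut ss.
- exists (s u); rewrite HA uA /=. by rewrite s_aut.
Qed.

Lemma inv_D2 A v : inv A -> inv (A :\ v :\ s v).
Proof.
move=> HA x; rewrite !inE HA (inj_eq (@perm_inj _ s)).
have -> : (s x == v) = (x == s v).
  by rewrite -{1}(ss v) (inj_eq (@perm_inj _ s)).
by rewrite andbCA.
Qed.

Lemma mainlem n : forall m (S : {set T}), m <= n -> #|S| <= m -> inv S ->
  (forall x, x \in S -> exists2 u, u \in S & e x u) ->
  (forall x, x \in S -> s x != x) -> ~~ grim_win e m S.
Proof.
elim: n => [|n IH] [|m] S //= Hmn Hcard HS Hcl Hfix.
apply/negP => /existsP [v /andP [vS /negP]]; apply.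
have svS : s v \in S by rewrite HS.
have svv : s v != v by apply: Hfix.
have sv1 : s v \in grim_move e S v.
  rewrite inE !inE svv svS /=.
  have [u uS esu] := Hcl _ svS; apply/existsP; exists u; rewrite !inE uS andbT esu andbT.
  apply/eqP => uv; move: esu; rewrite uv e_sym.
  by move/negP: (s_nonadj v).
have c2 : 2 <= #|S|.
  rewrite (cardsD1 v S) vS (cardsD1 (s v)) !inE svv svS /=. by [].
case: m Hmn Hcard => [|k] Hmn Hcard; first by move: (leq_trans c2 Hcard).
rewrite /=; apply/existsP; exists (s v); rewrite sv1 /=.
rewrite [grim_move e S v]/grim_move move_drop.
apply: (IH k).
- by move: Hmn; rewrite !ltnS; apply: leqW.
- apply: (leq_trans (subset_leq_card (drop_sub _))).
  move: Hcard; rewrite (cardsD1 v S) vS (cardsD1 (s v) (S :\ v)) !inE svv svS /=.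
  by rewrite !add1n !ltnS.
- by apply: inv_drop; apply: inv_D2.
- by apply: drop_closed.
- by move=> x; rewrite inE => /andP [] ; rewrite !inE => /andP [_ /andP [_ /Hfix]].
Qed.

End Aux.

Theorem corollary4p3 (T : finType) (e : rel T)
  (e_sym : symmetric e) (e_irr : irreflexive e)
  (no_isolated : forall v : T, exists u : T, e v u)
  (s : {perm T})
  (s_aut : forall x y : T, e (s x) (s y) = e x y)
  (s_order2 : #[s]%g = 2)
  (s_one_fixed : exists! v0 : T, s v0 = v0)
  (s_nonadj : forall v : T, ~~ e v (s v)) :
  grim_N e.
Proof.
have ss : forall x, s (s x) = x.
  move=> x; have := expg_order s; rewrite s_order2 expgS expg1 => H.
  by rewrite -permM H perm1.
case: s_one_fixed => v0 [sv0 Huniq].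
rewrite /grim_N.
have cT : 0 < #|T| by apply/card_gt0P; exists v0.
case E: #|T| cT => [|m] // _ /=.
apply/existsP; exists v0.
have [u eu] := no_isolated v0.
rewrite !inE /=; apply/andP; split.
  by apply/existsP; exists u; rewrite inE.
rewrite move_drop //.
apply: (mainlem e_sym s_aut ss s_nonadj (leqnn m)).
- apply: (leq_trans (subset_leq_card (drop_sub e _))).
  have H : #|[set: T] :\ v0| = m.
    by apply/eqP; rewrite -eqSS -E -cardsT (cardsD1 v0 [set: T]) inE add1n.
  by rewrite -H subset_leq_card.
- apply: inv_drop => // x; rewrite !inE -{1}sv0 (inj_eq (@perm_inj _ s)) //.
- by apply: drop_closed.
- move=> x; rewrite !inE => /andP [/andP [xv0 _] _]; apply/eqP => sx.
  by move: xv0; rewrite (Huniq x sx) eqxx.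
Qed.
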